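(* Under the hypotheses of the Main Lemma (in particular hypotheses 1–3), define $\alpha_{xy}:=\sum_m u_x(m)u_y(m)$, $\alpha_x:=\sum_y p(y|x)\alpha_{xy}$, $\alpha_y:=\sum_x p(x|y)\alpha_{xy}$, $v_x(m):=\sum_y p(y|x)u_y(m)$, $v_y(m):=\sum_x p(x|y)u_x(m)$, $\Delta:=\frac{c/\varepsilon+1}{\varepsilon}+2$, and let $M_{xy},M_x,M_y$ denote $M$ conditioned on $XY=xy$, on $X=x$, on $Y=y$ respectively. Let $G_1:=\{(x,y): |1-\alpha_{xy}/q|\le1/2,\ |1-\alpha_x/q|\le1/2,\ |1-\alpha_y/q|\le1/2\}$, $G_2:=\{(x,y): S(M_{xy}\|M_x)+S(M_{xy}\|M_y)\le c/\varepsilon\}$, $G:=\{(x,y):\Pr_{m\leftarrow M_{xy}}[u_y(m)/v_x(m)\le2^{\Delta}\text{ and }u_x(m)/v_y(m)\le2^{\Delta}]\ge1-2\varepsilon\}$. Then (1) $\Pr_{(x,y)\leftarrow p}[(x,y)\in G_1]>1-6\varepsilon$; (2) $\Pr_{(x,y)\leftarrow p}[(x,y)\in G_2]\ge1-3\varepsilon/2$; (3) $\Pr_{(x,y)\leftarrow p}[(x,y)\in G_1\cap G_2]\ge1-15\varepsilon/2$; (4) $G_1\cap G_2\subseteq G$.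
   Context: Main Lemma hypotheses: $c\ge1$, $0<\varepsilon<1/3$, $p$ a distribution on finite $\mathcal{X}\times\mathcal{Y}$, $XYM$ jointly distributed on $\mathcal{X}\times\mathcal{Y}\times\mathcal{M}$ ($\mathcal{M}$ finite), functions $u_x,u_y:\mathcal{M}\to[0,1]$, with (1) $\Pr[XYM=xym]=\frac1q p(x,y)u_x(m)u_y(m)$ where $q:=\sum_{x,y,m}p(x,y)u_x(m)u_y(m)>0$; (2) $S(XY\|p)\le\varepsilon^2/4$; (3) $I(X:M\mid Y)+I(Y:M\mid X)\le c$. Here $p(y|x),p(x|y)$ are conditional probabilities under $p$; $S$ is relative entropy and $I$ conditional mutual information (base 2). *)

(* Defs.v *)
From mathcomp Require Import all_boot.
From Stdlib Require Import Reals.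
Set Implicit Arguments. Unset Strict Implicit. Unset Printing Implicit Defensive.

Local Open Scope R_scope.

Definition rsum (T : finType) (f : T -> R) : R := \big[Rplus/R0]_(i : T) f i.

Definition Rleb (a b : R) : bool := if Rle_dec a b then true else false.
Definition Rltb (a b : R) : bool := if Rlt_dec a b then true else false.

Definition log2 (x : R) : R := ln x / ln 2.

Definition prob (T : finType) (P : T -> R) (E : T -> bool) : R :=
  rsum (fun t => if E t then P t else 0).

Definition relent (T : finType) (P Q : T -> R) : R :=
  rsum (fun t => if Rltb 0 (P t) then P t * log2 (P t / Q t) else 0).

Section Defs.
Variables (X Y M : finType) (p : X -> Y -> R) (ux : X -> M -> R) (uy : Y -> M -> R).

Definition pX (x : X) : R := rsum (fun y => p x y).
Definition pY (y : Y) : R := rsum (fun x => p x y).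
Definition p_y_given_x (x : X) (y : Y) : R := p x y / pX x.
Definition p_x_given_y (x : X) (y : Y) : R := p x y / pY y.

Definition qc : R := rsum (fun x => rsum (fun y => rsum (fun m => p x y * ux x m * uy y m))).

(* joint distribution of XYM, hypothesis (1) *)
Definition PXYM (x : X) (y : Y) (m : M) : R := p x y * ux x m * uy y m / qc.
Definition PXY (x : X) (y : Y) : R := rsum (fun m => PXYM x y m).
Definition PX (x : X) : R := rsum (fun y => PXY x y).
Definition PY (y : Y) : R := rsum (fun x => PXY x y).
Definition PXM (x : X) (m : M) : R := rsum (fun y => PXYM x y m).
Definition PYM (y : Y) (m : M) : R := rsum (fun x => PXYM x y m).

Definition PXYpair (z : X * Y) : R := PXY z.1 z.2.
Definition ppair (z : X * Y) : R := p z.1 z.2.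

Definition CMI_XM_Y : R :=
  rsum (fun x => rsum (fun y => rsum (fun m =>
    if Rltb 0 (PXYM x y m)
    then PXYM x y m * log2 (PXYM x y m * PY y / (PXY x y * PYM y m)) else 0))).
Definition CMI_YM_X : R :=
  rsum (fun x => rsum (fun y => rsum (fun m =>
    if Rltb 0 (PXYM x y m)
    then PXYM x y m * log2 (PXYM x y m * PX x / (PXY x y * PXM x m)) else 0))).

Definition alpha_xy (x : X) (y : Y) : R := rsum (fun m => ux x m * uy y m).
Definition alpha_x (x : X) : R := rsum (fun y => p_y_given_x x y * alpha_xy x y).
Definition alpha_y (y : Y) : R := rsum (fun x => p_x_given_y x y * alpha_xy x y).
Definition v_x (x : X) (m : M) : R := rsum (fun y => p_y_given_x x y * uy y m).
Definition v_y (y : Y) (m : M) : R := rsum (fun x => p_x_given_y x y * ux x m).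

Definition M_xy (x : X) (y : Y) (m : M) : R := PXYM x y m / PXY x y.
Definition M_x (x : X) (m : M) : R := PXM x m / PX x.
Definition M_y (y : Y) (m : M) : R := PYM y m / PY y.

Definition Delta (c eps : R) : R := (c / eps + 1) / eps + 2.

Definition inG1 (x : X) (y : Y) : bool :=
  [&& Rleb (Rabs (1 - alpha_xy x y / qc)) (1/2),
      Rleb (Rabs (1 - alpha_x x / qc)) (1/2)
    & Rleb (Rabs (1 - alpha_y y / qc)) (1/2)].

Definition inG2 (c eps : R) (x : X) (y : Y) : bool :=
  Rleb (relent (M_xy x y) (M_x x) + relent (M_xy x y) (M_y y)) (c / eps).

(* u_y(m)/v_x(m) <= 2^Delta written as u_y(m) <= 2^Delta * v_x(m) *)
Definition inG (c eps : R) (x : X) (y : Y) : bool :=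
  Rleb (1 - 2 * eps)
    (prob (M_xy x y) (fun m =>
       Rleb (uy y m) (Rpower 2 (Delta c eps) * v_x x m)
       && Rleb (ux x m) (Rpower 2 (Delta c eps) * v_y y m))).

Definition prp (E : X -> Y -> bool) : R := prob ppair (fun z => E z.1 z.2).

End Defs.

(* Main.v *)
Require Import Defs.
From HB Require Import structures.
From mathcomp Require Import all_boot.
From Stdlib Require Import Reals Lra Psatz.
Local Open Scope R_scope.
Set Implicit Arguments. Unset Strict Implicit.

HB.instance Definition _ := Monoid.isComLaw.Build R R0 Rplus (fun a b c => esym (Rplus_assoc a b c)) Rplus_comm Rplus_0_l.

Section Basics.
Variable T : finType.
Implicit Types f g : T -> R.

Lemma rsum_ext f g : (forall t, f t = g t) -> rsum f = rsum g.
Proof. move=> H; rewrite /rsum; apply: eq_bigr => i _; exact: H. Qed.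

Lemma rsum_le f g : (forall t, f t <= g t) -> rsum f <= rsum g.
Proof. move=> H; rewrite /rsum; elim/big_rec2: _ => //=; first lra.
move=> i a b _ Hab; have := H i; lra. Qed.

Lemma rsum_add f g : rsum (fun t => f t + g t) = rsum f + rsum g.
Proof. by rewrite /rsum big_split. Qed.

Lemma rsum_scal a f : rsum (fun t => a * f t) = a * rsum f.
Proof. rewrite /rsum; elim/big_rec2: _ => //=; first lra.
move=> i x y _ ->; lra. Qed.

Lemma rsum_0 : rsum (fun _ : T => 0) = 0.
Proof. rewrite /rsum; elim/big_rec: _ => //= i x _ ->; lra. Qed.

Lemma rsum_opp f : rsum (fun t => - f t) = - rsum f.
Proof. rewrite /rsum; elim/big_rec2: _ => //=; first lra.
move=> i x y _ ->; lra. Qed.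

Lemma rsum_sub f g : rsum (fun t => f t - g t) = rsum f - rsum g.
Proof. by rewrite rsum_add rsum_opp. Qed.

Lemma rsum_ge0 f : (forall t, 0 <= f t) -> 0 <= rsum f.
Proof. move=> H; rewrite -rsum_0; exact: rsum_le. Qed.

Lemma rsum_ge_term f t : (forall t, 0 <= f t) -> f t <= rsum f.
Proof. move=> H; rewrite /rsum (bigD1 t) //=.
have : 0 <= \big[Rplus/R0]_(i | i != t) f i.
  elim/big_rec: _ => //=; first lra. move=> i x _ Hx; have := H i; lra.
lra. Qed.

Lemma rsum_abs f : Rabs (rsum f) <= rsum (fun t => Rabs (f t)).
Proof. rewrite /rsum; elim/big_rec2: _ => //=.
 rewrite Rabs_R0; lra.
move=> i x y _ Hxy. eapply Rle_trans; first exact: Rabs_triang. lra. Qed.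

Lemma rsum_eq0 f : (forall t, 0 <= f t) -> rsum f = 0 -> forall t, f t = 0.
Proof. move=> H H0 t; have := rsum_ge_term t H; have := H t; lra. Qed.

End Basics.

Lemma rsum_exchange (I J : finType) (F : I -> J -> R) :
  rsum (fun i => rsum (fun j => F i j)) = rsum (fun j => rsum (fun i => F i j)).
Proof. by rewrite /rsum exchange_big. Qed.

Lemma rsum_pair (I J : finType) (F : I -> J -> R) :
  rsum (fun z : I * J => F z.1 z.2) = rsum (fun i => rsum (fun j => F i j)).
Proof. by rewrite /rsum pair_big. Qed.

Lemma Rleb_spec a b : Rleb a b = true <-> a <= b.
Proof. rewrite /Rleb; case: Rle_dec => //. Qed.
Lemma Rltb_spec a b : Rltb a b = true <-> a < b.
Proof. rewrite /Rltb; case: Rlt_dec => //. Qed.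

Lemma ln_le_sub1 x : 0 < x -> ln x <= x - 1.
Proof. move=> Hx. have E := exp_ln x Hx.
case: (Req_dec (ln x) 0) => H0. rewrite H0 in E *; rewrite -E exp_0; lra.
have := exp_ineq1 (ln x) H0; lra. Qed.

Lemma ln2_bounds : / 2 < ln 2 < 1.
Proof. split; first exact: ln_lt_2.
rewrite -[1]ln_exp; apply: ln_increasing; first lra.
have := exp_ineq1 1 ltac:(lra); lra. Qed.

Section Prob.
Variable T : finType.
Implicit Types (P Q : T -> R) (E : T -> bool).

Lemma prob_compl P E : prob P E = rsum P - prob P (fun t => ~~ E t).
Proof. rewrite /prob -rsum_sub; apply: rsum_ext => t; case: (E t) => /=; lra. Qed.

Lemma prob_false P : prob P (fun _ => false) = 0.
Proof. exact: rsum_0. Qed.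

Lemma prob_ge0 P E : (forall t, 0 <= P t) -> 0 <= prob P E.
Proof. move=> H; apply: rsum_ge0 => t; case: (E t) => //; lra. Qed.

Lemma prob_le P E : (forall t, 0 <= P t) -> prob P E <= rsum P.
Proof. move=> H; apply: rsum_le => t; case: (E t); have := H t; lra. Qed.

Lemma prob_union P E1 E2 : (forall t, 0 <= P t) ->
  prob P (fun t => ~~ (E1 t && E2 t)) <= prob P (fun t => ~~ E1 t) + prob P (fun t => ~~ E2 t).
Proof. move=> H; rewrite /prob -rsum_add; apply: rsum_le => t.
have := H t; case: (E1 t); case: (E2 t) => /=; lra. Qed.

Definition kn P Q t := if Rltb 0 (P t) then P t * ln (P t / Q t) else 0.

Lemma relent_ln P Q : ln 2 * relent P Q = rsum (kn P Q).
Proof. rewrite /relent -rsum_scal; apply: rsum_ext => t; rewrite /kn /log2.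
case: (Rltb 0 (P t)); last lra. have := ln2_bounds; move=> ?; field; lra. Qed.

Lemma ln_ratio_ge a b : 0 < a -> 0 < b -> a * ln (a / b) >= a - b.
Proof. move=> Ha Hb.
have H1 : ln (a / b) + ln (b / a) = 0.
  rewrite -ln_mult; try (apply: Rdiv_lt_0_compat; lra).
  replace (a / b * (b / a)) with 1 by (field; lra). exact: ln_1.
have H2 := @ln_le_sub1 (b / a) ltac:(apply: Rdiv_lt_0_compat; lra).
have H3 : a * (b / a - 1) = b - a by field; lra.
nra. Qed.

Lemma tail_bound P Q E k :
  (forall t, 0 <= P t) -> (forall t, 0 <= Q t) -> rsum P = 1 -> rsum Q <= 1 ->
  (forall t, 0 < P t -> 0 < Q t) ->
  (forall t, E t -> 0 < P t -> Rpower 2 k * Q t < P t) ->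
  (k * ln 2 - 1) * prob P E <= ln 2 * relent P Q.
Proof. move=> HP HQ SP SQ HPQ HE.
rewrite relent_ln.
set g := fun t => k * ln 2 * (if E t then P t else 0) + P t - (if E t then P t else 0)
                  - (if E t then 0 else Q t).
have Hg : forall t, g t <= kn P Q t.
  move=> t; rewrite /g /kn. have Hp := HP t; have Hq := HQ t.
  case Hb: (Rltb 0 (P t)); [move/Rltb_spec: Hb => Hpt | have Hpt : P t = 0 by
    case: (Rltb_spec 0 (P t)) => H1 H2; case: (Rle_lt_or_eq_dec _ _ Hp) => //; move/H2; rewrite Hb].
  - have Hq' := HPQ t Hpt. case Et: (E t).
    + have Hlt := HE t Et Hpt.
      have Hk : k * ln 2 < ln (P t / Q t).
        have -> : k * ln 2 = ln (Rpower 2 k) by rewrite /Rpower ln_exp.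
        apply: ln_increasing; first by rewrite /Rpower; apply: exp_pos.
        apply (Rmult_lt_reg_r (Q t)) => //.
        have -> : P t / Q t * Q t = P t by field; lra. lra.
      nra.
    + have := ln_ratio_ge Hpt Hq'; lra.
  - rewrite Hpt; case: (E t); lra.
have := rsum_le Hg. rewrite /g !rsum_sub rsum_add rsum_scal SP.
have : rsum (fun t => if E t then 0 else Q t) <= 1.
  apply: Rle_trans SQ; apply: rsum_le => t; case: (E t); have := HQ t; lra.
rewrite /prob. lra.
Qed.
End Prob.

Section Div.
Variable T : finType.
Implicit Types (P Q : T -> R) (E : T -> bool).

Lemma relent_ge0 P Q :
  (forall t, 0 <= P t) -> (forall t, 0 <= Q t) -> rsum P = 1 -> rsum Q <= 1 ->
  (forall t, 0 < P t -> 0 < Q t) -> 0 <= relent P Q.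
Proof. move=> HP HQ SP SQ HPQ.
have := @tail_bound T P Q (fun _ => false) 0 HP HQ SP SQ HPQ ltac:(done).
rewrite prob_false. have := ln2_bounds. nra. Qed.

Lemma pt_abs a b t : 0 <= a -> 0 <= b -> 0 < t ->
  Rabs (a * a - b * b) <= t / 2 * (a * a + b * b - 2 * (a * b)) + (a * a + b * b) / t.
Proof. move=> Ha Hb Ht.
apply (Rmult_le_reg_l t) => //.
have -> : t * (t / 2 * (a * a + b * b - 2 * (a * b)) + (a * a + b * b) / t)
   = t * t * ((a - b) * (a - b)) / 2 + (a * a + b * b) by field; lra.
have E : Rabs (a * a - b * b) = Rabs (a - b) * (a + b).
  rewrite -[a+b]Rabs_pos_eq; last lra. rewrite -Rabs_mult; f_equal; ring.
rewrite E.
have H1 : Rabs (a - b) * Rabs (a - b) = (a - b) * (a - b).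
  rewrite -Rabs_mult; apply: Rabs_pos_eq; apply: Rle_0_sqr.
have H0 := Rabs_pos (a - b).
have H2 := Rle_0_sqr (t * Rabs (a - b) - (a + b)).
have H3 := Rle_0_sqr (a - b). rewrite /Rsqr in H2 H3.
nra. Qed.

Lemma pt_kn a b : 0 <= a -> 0 <= b -> (0 < a -> 0 < b) ->
  2 * (a - sqrt a * sqrt b) <= (if Rltb 0 a then a * ln (a / b) else 0).
Proof. move=> Ha Hb Hab.
case Hl: (Rltb 0 a).
- move/Rltb_spec: Hl => Ha'. have Hb' := Hab Ha'.
  have sa := sqrt_lt_R0 a Ha'. have sb := sqrt_lt_R0 b Hb'.
  have Hr := ln_ratio_ge sa sb.
  have E : a / b = (sqrt a / sqrt b) * (sqrt a / sqrt b).
    have -> : sqrt a / sqrt b * (sqrt a / sqrt b) = (sqrt a * sqrt a) / (sqrt b * sqrt b)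
      by field; lra.
    by rewrite !sqrt_sqrt.
  rewrite E ln_mult; try (apply: Rdiv_lt_0_compat; lra).
  have := sqrt_sqrt a Ha. nra.
- have : a = 0. case: (Rle_lt_or_eq_dec _ _ Ha) => // H; move/Rltb_spec: H; rewrite Hl //.
  move=> ->; rewrite sqrt_0; lra.
Qed.

Lemma L1_bound P Q e :
  (forall t, 0 <= P t) -> (forall t, 0 <= Q t) -> rsum P = 1 -> rsum Q = 1 ->
  (forall t, 0 < P t -> 0 < Q t) -> 0 < e -> relent P Q <= e ^ 2 / 4 ->
  rsum (fun t => Rabs (Q t - P t)) < e.
Proof. move=> HP HQ SP SQ HPQ He Hr.
set t0 := 4 / e.
have Ht0 : 0 < t0 by rewrite /t0; apply: Rdiv_lt_0_compat; lra.
have H1 : rsum (fun t => Rabs (Q t - P t)) <=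
  rsum (fun t => t0 / 2 * (P t + Q t - 2 * (sqrt (P t) * sqrt (Q t))) + (P t + Q t) / t0).
  apply: rsum_le => t. rewrite Rabs_minus_sym.
  have := pt_abs (sqrt_pos (P t)) (sqrt_pos (Q t)) Ht0.
  by rewrite !sqrt_sqrt.
have H2 : rsum (fun t => 2 * (P t - sqrt (P t) * sqrt (Q t))) <= rsum (kn P Q)
  := rsum_le (fun t => pt_kn (HP t) (HQ t) (@HPQ t)).
rewrite -relent_ln rsum_scal rsum_sub SP in H2.
set S := rsum (fun t => sqrt (P t) * sqrt (Q t)) in H1 H2.
have E : rsum (fun t => t0 / 2 * (P t + Q t - 2 * (sqrt (P t) * sqrt (Q t))) + (P t + Q t) / t0)
   = t0 / 2 * (2 - 2 * S) + / t0 * 2.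
  rewrite rsum_add.
  have -> : rsum (fun t => (P t + Q t) / t0) = rsum (fun t => / t0 * (P t + Q t))
    by apply: rsum_ext => t; rewrite /Rdiv Rmult_comm.
  by rewrite !rsum_scal rsum_sub !rsum_add SP SQ rsum_scal.
rewrite E in H1.
have Hl := ln2_bounds.
have H3 : t0 / 2 * (2 - 2 * S) <= t0 / 2 * (ln 2 * relent P Q) by apply: Rmult_le_compat_l; lra.
rewrite /t0 in H1 H3.
have E3 : 4 / e / 2 * (ln 2 * relent P Q) = 2 / e * ln 2 * relent P Q by field; lra.
rewrite E3 in H3.
have E2 : / (4 / e) * 2 = e / 2 by field; lra.
rewrite E2 in H1.
have H4 : 2 / e * ln 2 * relent P Q <= 2 / e * ln 2 * (e ^ 2 / 4).
  apply: Rmult_le_compat_l => //. apply: Rmult_le_pos; [apply: Rlt_le; apply: Rdiv_lt_0_compat|]; lra.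
have E4 : 2 / e * ln 2 * (e ^ 2 / 4) = ln 2 * e / 2 by field; lra.
rewrite E4 in H4.
nra.
Qed.
End Div.

Lemma Rpower_sub2 d : Rpower 2 d = 4 * Rpower 2 (d - 2).
Proof. have -> : d = (d - 2) + INR 2 by rewrite /INR; ring.
rewrite Rpower_plus Rpower_pow; last lra. have -> : d - 2 + INR 2 - 2 = d - 2 by rewrite /INR; ring.
simpl; ring. Qed.

Lemma tail_eps (T : finType) (P Q a b v : T -> R) (A B c eps : R) :
  0 < eps -> eps < 1/3 -> 0 < c ->
  (forall t, 0 <= P t) -> (forall t, 0 <= Q t) -> rsum P = 1 -> rsum Q <= 1 ->
  (forall t, 0 < P t -> 0 < Q t) -> relent P Q <= c / eps ->
  0 < A -> 0 < B -> A <= 3 * B ->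
  (forall t, P t = a t * b t / A) -> (forall t, Q t = a t * v t / B) ->
  (forall t, 0 <= a t) -> (forall t, 0 <= v t) ->
  prob P (fun t => ~~ Rleb (b t) (Rpower 2 (Defs.Delta c eps) * v t)) <= eps.
Proof. move=> He He3 Hc HP HQ SP SQ HPQ Hr HA HB HAB EP EQ Ha Hv.
set k := (c / eps + 1) / eps.
have Hk : Defs.Delta c eps = k + 2 by rewrite /Defs.Delta /k.
have HK := exp_pos (k * ln 2).
have HT := @tail_bound T P Q (fun t => ~~ Rleb (b t) (Rpower 2 (Defs.Delta c eps) * v t)) k HP HQ SP SQ HPQ.
have Hl := ln2_bounds.
have Hpe := prob_ge0 (fun t => ~~ Rleb (b t) (Rpower 2 (Defs.Delta c eps) * v t)) HP.
set pe := prob P _ in HT Hpe *.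
have H1 : (k * ln 2 - 1) * pe <= ln 2 * relent P Q.
  apply: HT => t Et Pt.
  rewrite Rpower_sub2 Hk in Et. replace (k + 2 - 2) with k in Et by ring.
  have Hb : ~ b t <= 4 * Rpower 2 k * v t by move=> H; move/Rleb_spec: H => H; rewrite H in Et.
  rewrite (EP t) in Pt; rewrite (EP t) (EQ t).
  have Hat : 0 < a t.
    case: (Rle_lt_or_eq_dec _ _ (Ha t)) => // E; rewrite -E in Pt; rewrite /Rdiv !Rmult_0_l in Pt; lra.
  have Kp : 0 < Rpower 2 k by rewrite /Rpower.
  have Hvt := Hv t.
  have S1 : Rpower 2 k * (a t * v t / B) = (Rpower 2 k * a t * v t) * / B by rewrite /Rdiv; ring.
  have S2 : a t * b t / A = (a t * b t) * / A by [].
  rewrite S1 S2.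
  have iA := Rinv_0_lt_compat _ HA. have iB := Rinv_0_lt_compat _ HB.
  have E1 : A * / A = 1 by field; lra.
  have E2 : B * / B = 1 by field; lra.
  have L1 : (Rpower 2 k * a t * v t) * / B <= 4 * (Rpower 2 k * a t * v t) * / A.
    have Hn : 0 <= Rpower 2 k * a t * v t by apply: Rmult_le_pos; [apply: Rmult_le_pos|]; lra.
    have : / B <= 4 * / A.
      apply: (Rmult_le_reg_l (A * B)); first nra.
      have -> : A * B * / B = A by field; lra.
      have -> : A * B * (4 * / A) = 4 * B by field; lra. lra.
    nra.
  have L2 : 4 * (Rpower 2 k * a t * v t) * / A < (a t * b t) * / A.
    apply: Rmult_lt_compat_r => //. nra.
  lra.
have Hkl : 3 <= k.
  rewrite /k. apply: (Rmult_le_reg_l eps) => //.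
  have -> : eps * ((c / eps + 1) / eps) = c / eps + 1 by field; lra.
  have : 0 < c / eps by apply: Rdiv_lt_0_compat. lra.
have HA' : 0 < k * ln 2 - 1 by nra.
have H2 : ln 2 * (c / eps) <= (k * ln 2 - 1) * eps.
  have -> : (k * ln 2 - 1) * eps = (c / eps + 1) * ln 2 - eps by rewrite /k; field; lra.
  lra.
have H3 : (k * ln 2 - 1) * pe <= (k * ln 2 - 1) * eps.
  apply: Rle_trans H1 _. apply: Rle_trans H2. apply: Rmult_le_compat_l; lra.
exact: (Rmult_le_reg_l _ _ _ HA' H3).
Qed.

Section Main.
Variables (X Y M : finType) (p : X -> Y -> R) (ux : X -> M -> R) (uy : Y -> M -> R).
Hypothesis hp0 : forall x y, 0 <= p x y.
Hypothesis hp1 : rsum (fun x => rsum (fun y => p x y)) = 1.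
Hypothesis hux : forall x m, 0 <= ux x m <= 1.
Hypothesis huy : forall y m, 0 <= uy y m <= 1.
Hypothesis hq : 0 < qc p ux uy.

Local Notation q := (qc p ux uy).
Local Notation PXYM := (PXYM p ux uy).
Local Notation PXY := (PXY p ux uy).
Local Notation PX := (PX p ux uy).
Local Notation PY := (PY p ux uy).
Local Notation PXM := (PXM p ux uy).
Local Notation PYM := (PYM p ux uy).
Local Notation pX := (pX p).
Local Notation pY := (pY p).

Lemma PXYM_ge0 x y m : 0 <= PXYM x y m.
Proof. rewrite /Defs.PXYM. have := hux x m; have := huy y m; have := hp0 x y.
move=> *. apply: Rmult_le_pos; last by apply: Rlt_le; apply: Rinv_0_lt_compat.
apply: Rmult_le_pos; [apply: Rmult_le_pos|]; lra. Qed.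

Lemma PXY_ge0 x y : 0 <= PXY x y.
Proof. apply: rsum_ge0 => m; exact: PXYM_ge0. Qed.

Lemma alpha_ge0 x y : 0 <= alpha_xy ux uy x y.
Proof. apply: rsum_ge0 => m; have := hux x m; have := huy y m; nra. Qed.

Lemma PXY_eq x y : PXY x y = p x y * alpha_xy ux uy x y / q.
Proof. rewrite /Defs.PXY /alpha_xy.
have -> : forall A, p x y * A / q = p x y / q * A by move=> A; field; lra.
rewrite -rsum_scal.
apply: rsum_ext => m; rewrite /Defs.PXYM; field; lra. Qed.

Lemma sum_PXY : rsum (fun x => rsum (fun y => PXY x y)) = 1.
Proof.
have E : forall x y, PXY x y = / q * rsum (fun m => p x y * ux x m * uy y m).
  move=> x y; rewrite /Defs.PXY -rsum_scal; apply: rsum_ext => m; rewrite /Defs.PXYM; field; lra.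
rewrite (rsum_ext (g := fun x => / q * rsum (fun y => rsum (fun m => p x y * ux x m * uy y m)))).
  rewrite rsum_scal; change (/ q * q = 1); field; lra.
move=> x; rewrite -rsum_scal; apply: rsum_ext => y; exact: E.
Qed.

Lemma PXY_pos_p x y : 0 < PXY x y -> 0 < p x y.
Proof. rewrite PXY_eq => H. case: (Rle_lt_or_eq_dec _ _ (hp0 x y)) => // E.
rewrite -E in H; lra. Qed.

Lemma PX_eq x : PX x = / q * rsum (fun y => p x y * alpha_xy ux uy x y).
Proof. rewrite /Defs.PX -rsum_scal; apply: rsum_ext => y; rewrite PXY_eq; field; lra. Qed.
Lemma PY_eq y : PY y = / q * rsum (fun x => p x y * alpha_xy ux uy x y).
Proof. rewrite /Defs.PY -rsum_scal; apply: rsum_ext => x; rewrite PXY_eq; field; lra. Qed.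

Lemma alpha_x_eq x : 0 < pX x -> alpha_x p ux uy x / q = PX x / pX x.
Proof. move=> Hx. rewrite PX_eq /alpha_x.
have -> : rsum (fun y => p_y_given_x p x y * alpha_xy ux uy x y) =
          / pX x * rsum (fun y => p x y * alpha_xy ux uy x y).
  rewrite -rsum_scal; apply: rsum_ext => y; rewrite /p_y_given_x; field; lra.
field; lra. Qed.

Lemma alpha_y_eq y : 0 < pY y -> alpha_y p ux uy y / q = PY y / pY y.
Proof. move=> Hy. rewrite PY_eq /alpha_y.
have -> : rsum (fun x => p_x_given_y p x y * alpha_xy ux uy x y) =
          / pY y * rsum (fun x => p x y * alpha_xy ux uy x y).
  rewrite -rsum_scal; apply: rsum_ext => x; rewrite /p_x_given_y; field; lra.
field; lra. Qed.

Lemma pX_ge0 x : 0 <= pX x. Proof. apply: rsum_ge0 => y; exact: hp0. Qed.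
Lemma pY_ge0 y : 0 <= pY y. Proof. apply: rsum_ge0 => x; exact: hp0. Qed.

Definition L1 := rsum (fun x => rsum (fun y => Rabs (p x y - PXY x y))).

Lemma L1_lt e : 0 < e -> relent (PXYpair p ux uy) (ppair p) <= e ^ 2 / 4 -> L1 < e.
Proof. move=> He Hr. rewrite /L1 -(rsum_pair (fun x y => Rabs (p x y - PXY x y))).
apply: (L1_bound (P := PXYpair p ux uy) (Q := ppair p)) => //.
- move=> [x y]; exact: PXY_ge0.
- move=> [x y]; exact: hp0.
- by rewrite /PXYpair (rsum_pair (fun x y => PXY x y)) sum_PXY.
- by rewrite /ppair (rsum_pair (fun x y => p x y)).
- move=> [x y]; exact: PXY_pos_p.
Qed.

Lemma bad_bound a b r : 0 <= a -> (0 < a -> r = b / a) ->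
  (if ~~ Rleb (Rabs (1 - r)) (1/2) then a else 0) <= 2 * Rabs (a - b).
Proof. move=> Ha Hr. have H0 := Rabs_pos (a - b).
case Hb: (Rleb (Rabs (1 - r)) (1/2)) => /=; first lra.
case: (Rle_lt_or_eq_dec _ _ Ha) => Ha'; last lra.
rewrite (Hr Ha') in Hb.
have E : Rabs (1 - b / a) * a = Rabs (a - b).
  rewrite -{2}(Rabs_pos_eq a) // -Rabs_mult; f_equal; field; lra.
have : ~ Rabs (1 - b / a) <= 1/2 by move/Rleb_spec; rewrite Hb.
nra. Qed.

Lemma rsum_if (T : finType) (b : bool) (f : T -> R) :
  rsum (fun t => if b then f t else 0) = if b then rsum f else 0.
Proof. case: b => //; exact: rsum_0. Qed.

Lemma rsum2_add3 (I J : finType) (f g h : I -> J -> R) :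
  rsum (fun x => rsum (fun y => f x y + g x y + h x y)) =
  rsum (fun x => rsum (fun y => f x y)) + rsum (fun x => rsum (fun y => g x y)) +
  rsum (fun x => rsum (fun y => h x y)).
Proof. rewrite -!rsum_add; apply: rsum_ext => x; by rewrite -!rsum_add. Qed.

Lemma N1_bound : rsum (fun x => rsum (fun y => if ~~ inG1 p ux uy x y then p x y else 0)) <= 6 * L1.
Proof.
set b1 := fun x y => Rleb (Rabs (1 - alpha_xy ux uy x y / q)) (1/2).
set b2 := fun x => Rleb (Rabs (1 - alpha_x p ux uy x / q)) (1/2).
set b3 := fun y => Rleb (Rabs (1 - alpha_y p ux uy y / q)) (1/2).
have Hpt : forall x y, (if ~~ inG1 p ux uy x y then p x y else 0) <=
   (if ~~ b1 x y then p x y else 0) + (if ~~ b2 x then p x y else 0) + (if ~~ b3 y then p x y else 0).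
  move=> x y; rewrite /inG1 -/(b1 x y) -/(b2 x) -/(b3 y). have := hp0 x y.
  case: (b1 x y); case: (b2 x); case: (b3 y) => /=; lra.
have S1 : rsum (fun x => rsum (fun y => if ~~ b1 x y then p x y else 0)) <= 2 * L1.
  rewrite /L1 -rsum_scal; apply: rsum_le => x; rewrite -rsum_scal; apply: rsum_le => y.
  apply: bad_bound => // H. rewrite PXY_eq; field; lra.
have Dx : forall x, Rabs (pX x - PX x) <= rsum (fun y => Rabs (p x y - PXY x y)).
  move=> x; rewrite /Defs.pX /Defs.PX -rsum_sub; exact: rsum_abs.
have Dy : forall y, Rabs (pY y - PY y) <= rsum (fun x => Rabs (p x y - PXY x y)).
  move=> y; rewrite /Defs.pY /Defs.PY -rsum_sub; exact: rsum_abs.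
have S2 : rsum (fun x => rsum (fun y => if ~~ b2 x then p x y else 0)) <= 2 * L1.
  rewrite /L1 -rsum_scal; apply: rsum_le => x; rewrite rsum_if.
  apply: Rle_trans (_ : 2 * Rabs (pX x - PX x) <= _); last by have := Dx x; lra.
  apply: bad_bound; first exact: pX_ge0. move=> H; exact: alpha_x_eq.
have S3 : rsum (fun x => rsum (fun y => if ~~ b3 y then p x y else 0)) <= 2 * L1.
  rewrite /L1 rsum_exchange (rsum_exchange (fun x y => Rabs (p x y - PXY x y))) -rsum_scal.
  apply: rsum_le => y; rewrite rsum_if.
  apply: Rle_trans (_ : 2 * Rabs (pY y - PY y) <= _); last by have := Dy y; lra.
  apply: bad_bound; first exact: pY_ge0. move=> H; exact: alpha_y_eq.
have := rsum_le (fun x => rsum_le (fun y => Hpt x y)).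
rewrite rsum2_add3. lra.
Qed.

Lemma rsum_scar (T : finType) (a : R) (f : T -> R) : rsum (fun t => f t * a) = rsum f * a.
Proof. rewrite Rmult_comm -rsum_scal; apply: rsum_ext => t; ring. Qed.

Lemma Rltb_false a : a <= 0 -> Rltb 0 a = false.
Proof. move=> H; case E: (Rltb 0 a) => //; move/Rltb_spec: E; lra. Qed.
Lemma Rltb_true a : 0 < a -> Rltb 0 a = true.
Proof. by move/Rltb_spec. Qed.

Lemma cmi_pt a s b d : 0 <= a -> 0 <= s -> (s = 0 -> a = 0) -> (0 < a -> 0 < b) -> (0 < s -> 0 < d) ->
  s * (if Rltb 0 (a / s) then a / s * log2 (a / s / (b / d)) else 0) =
  (if Rltb 0 a then a * log2 (a * d / (s * b)) else 0).
Proof. move=> Ha Hs H0 Hab Hsd.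
case: (Rle_lt_or_eq_dec _ _ Hs) => Hs'; last first.
  rewrite -Hs' (H0 (esym Hs')) Rmult_0_l Rltb_false //; lra.
case: (Rle_lt_or_eq_dec _ _ Ha) => Ha'; last first.
  rewrite -Ha'. have -> : 0 / s = 0 by rewrite /Rdiv Rmult_0_l.
  rewrite !Rltb_false; try lra; ring.
have Hb := Hab Ha'. have Hd := Hsd Hs'.
rewrite !Rltb_true //; last by apply: Rdiv_lt_0_compat.
have -> : a / s / (b / d) = a * d / (s * b) by field; lra.
field; lra. Qed.

Lemma PXM_ge x y m : PXYM x y m <= PXM x m.
Proof. apply: (rsum_ge_term (f := fun y => PXYM x y m)) => y'; exact: PXYM_ge0. Qed.
Lemma PYM_ge x y m : PXYM x y m <= PYM y m.
Proof. apply: (rsum_ge_term (f := fun x => PXYM x y m)) => x'; exact: PXYM_ge0. Qed.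
Lemma PX_ge x y : PXY x y <= PX x.
Proof. apply: (rsum_ge_term (f := fun y => PXY x y)) => y'; exact: PXY_ge0. Qed.
Lemma PY_ge x y : PXY x y <= PY y.
Proof. apply: (rsum_ge_term (f := fun x => PXY x y)) => x'; exact: PXY_ge0. Qed.
Lemma PXY_zero x y m : PXY x y = 0 -> PXYM x y m = 0.
Proof. move=> H; apply: (rsum_eq0 (f := fun m => PXYM x y m)) => // m'; exact: PXYM_ge0. Qed.

Lemma sum_PXM x : rsum (fun m => PXM x m) = PX x.
Proof. rewrite /Defs.PXM /Defs.PX /Defs.PXY. exact: (rsum_exchange (fun m y => PXYM x y m)). Qed.
Lemma sum_PYM y : rsum (fun m => PYM y m) = PY y.
Proof. rewrite /Defs.PYM /Defs.PY /Defs.PXY. exact: (rsum_exchange (fun m x => PXYM x y m)). Qed.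

Local Notation f2 x y := (relent (M_xy p ux uy x y) (M_x p ux uy x) + relent (M_xy p ux uy x y) (M_y p ux uy y)).

Lemma CMI_eq : rsum (fun x => rsum (fun y => PXY x y * f2 x y)) = CMI_YM_X p ux uy + CMI_XM_Y p ux uy.
Proof.
rewrite (rsum_ext (g := fun x => rsum (fun y => PXY x y * relent (M_xy p ux uy x y) (M_x p ux uy x)) +
   rsum (fun y => PXY x y * relent (M_xy p ux uy x y) (M_y p ux uy y)))); last first.
  move=> x; rewrite -rsum_add; apply: rsum_ext => y; ring.
rewrite rsum_add /CMI_YM_X /CMI_XM_Y; f_equal; apply: rsum_ext => x; apply: rsum_ext => y;
  rewrite /relent -rsum_scal; apply: rsum_ext => m; rewrite /M_xy /M_x /M_y; apply: cmi_pt.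
all: try exact: PXYM_ge0; try exact: PXY_ge0; try (by move/PXY_zero).
- move=> H; have := PXM_ge x y m; lra.
- move=> H; have := PX_ge x y; lra.
- move=> H; have := PYM_ge x y m; lra.
- move=> H; have := PY_ge x y; lra.
Qed.

Lemma f2_ge0 x y : 0 < PXY x y -> 0 <= f2 x y.
Proof. move=> H.
have SP : rsum (M_xy p ux uy x y) = 1.
  rewrite /M_xy /Rdiv rsum_scar; change (PXY x y * / PXY x y = 1); field; lra.
have HP : forall m, 0 <= M_xy p ux uy x y m.
  move=> m; apply: Rle_mult_inv_pos => //; exact: PXYM_ge0.
have HPpos : forall m, 0 < M_xy p ux uy x y m -> 0 < PXYM x y m.
  move=> m; rewrite /M_xy => Hm. case: (Rle_lt_or_eq_dec _ _ (PXYM_ge0 x y m)) => // E.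
  rewrite -E /Rdiv Rmult_0_l in Hm; lra.
have HX := PX_ge x y; have HY := PY_ge x y.
apply: Rplus_le_le_0_compat; apply: relent_ge0 => //.
- move=> m; apply: Rle_mult_inv_pos; [apply: rsum_ge0 => y'; exact: PXYM_ge0|lra].
- rewrite /M_x /Rdiv rsum_scar sum_PXM; right; field; lra.
- move=> m /HPpos Hm; apply: Rdiv_lt_0_compat; [have := PXM_ge x y m|]; lra.
- move=> m; apply: Rle_mult_inv_pos; [apply: rsum_ge0 => x'; exact: PXYM_ge0|lra].
- rewrite /M_y /Rdiv rsum_scar sum_PYM; right; field; lra.
- move=> m /HPpos Hm; apply: Rdiv_lt_0_compat; [have := PYM_ge x y m|]; lra.
Qed.

Lemma markov_G2 c eps : 0 < c -> 0 < eps -> CMI_XM_Y p ux uy + CMI_YM_X p ux uy <= c ->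
  rsum (fun x => rsum (fun y => if ~~ inG2 p ux uy c eps x y then PXY x y else 0)) <= eps.
Proof. move=> Hc He H3.
have Hce : 0 < c / eps by apply: Rdiv_lt_0_compat.
have Hpt : forall x y, c / eps * (if ~~ inG2 p ux uy c eps x y then PXY x y else 0) <= PXY x y * f2 x y.
  move=> x y. rewrite /inG2. have := PXY_ge0 x y.
  case Hb: (Rleb _ _) => /= HP.
  - case: (Rle_lt_or_eq_dec _ _ HP) => HP'.
    + have := f2_ge0 HP'; nra.
    + rewrite -HP'; lra.
  - have : ~ (f2 x y <= c / eps) by move/Rleb_spec; rewrite Hb.
    nra.
have := rsum_le (fun x => rsum_le (fun y => Hpt x y)).
rewrite CMI_eq. rewrite (rsum_ext (g := fun x => c / eps * rsum (fun y => if ~~ inG2 p ux uy c eps x y then PXY x y else 0))); last by move=> x; rewrite rsum_scal.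
rewrite rsum_scal => H.
have H' : c / eps * rsum (fun x => rsum (fun y => if ~~ inG2 p ux uy c eps x y then PXY x y else 0)) <= c / eps * eps.
  have -> : c / eps * eps = c by field; lra. lra.
exact: (Rmult_le_reg_l _ _ _ Hce H').
Qed.

Lemma N2_bound c eps : 0 < c -> 0 < eps -> CMI_XM_Y p ux uy + CMI_YM_X p ux uy <= c ->
  rsum (fun x => rsum (fun y => if ~~ inG2 p ux uy c eps x y then p x y else 0)) <= eps + L1 / 2.
Proof. move=> Hc He H3.
have Hpt : forall x y, (if ~~ inG2 p ux uy c eps x y then p x y else 0) <=
  (if ~~ inG2 p ux uy c eps x y then PXY x y else 0) + / 2 * Rabs (p x y - PXY x y) + / 2 * (p x y - PXY x y).
  move=> x y. have := hp0 x y; have := PXY_ge0 x y.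
  case: (Rcase_abs (p x y - PXY x y)) => Hs.
  + rewrite Rabs_left //; case: (~~ _); lra.
  + rewrite Rabs_right //; case: (~~ _); lra.
have := rsum_le (fun x => rsum_le (fun y => Hpt x y)).
rewrite rsum2_add3.
have E1 : rsum (fun x => rsum (fun y => / 2 * Rabs (p x y - PXY x y))) = / 2 * L1.
  rewrite /L1 -rsum_scal; apply: rsum_ext => x; by rewrite rsum_scal.
have E2 : rsum (fun x => rsum (fun y => / 2 * (p x y - PXY x y))) = 0.
  rewrite (rsum_ext (g := fun x => / 2 * (rsum (fun y => p x y) - rsum (fun y => PXY x y)))).
    by rewrite rsum_scal rsum_sub hp1 sum_PXY; ring.
  by move=> x; rewrite -rsum_sub rsum_scal.
rewrite E1 E2. have := markov_G2 Hc He H3. lra.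
Qed.

Lemma Mxy_ge0 x y m : 0 < PXY x y -> 0 <= M_xy p ux uy x y m.
Proof. move=> H; apply: Rle_mult_inv_pos => //; exact: PXYM_ge0. Qed.
Lemma sum_Mxy x y : 0 < PXY x y -> rsum (M_xy p ux uy x y) = 1.
Proof. move=> H; rewrite /M_xy /Rdiv rsum_scar; change (PXY x y * / PXY x y = 1); field; lra. Qed.
Lemma Mx_ge0 x m : 0 < PX x -> 0 <= M_x p ux uy x m.
Proof. move=> H; apply: Rle_mult_inv_pos => //; apply: rsum_ge0 => y'; exact: PXYM_ge0. Qed.
Lemma My_ge0 y m : 0 < PY y -> 0 <= M_y p ux uy y m.
Proof. move=> H; apply: Rle_mult_inv_pos => //; apply: rsum_ge0 => x'; exact: PXYM_ge0. Qed.
Lemma sum_Mx x : 0 < PX x -> rsum (M_x p ux uy x) = 1.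
Proof. move=> H; rewrite /M_x /Rdiv rsum_scar sum_PXM; field; lra. Qed.
Lemma sum_My y : 0 < PY y -> rsum (M_y p ux uy y) = 1.
Proof. move=> H; rewrite /M_y /Rdiv rsum_scar sum_PYM; field; lra. Qed.
Lemma Mxy_pos x y m : 0 < M_xy p ux uy x y m -> 0 < PXYM x y m.
Proof. rewrite /M_xy => Hm. case: (Rle_lt_or_eq_dec _ _ (PXYM_ge0 x y m)) => // E.
  rewrite -E /Rdiv Rmult_0_l in Hm; lra. Qed.
Lemma supp_x x y m : 0 < PXY x y -> 0 < M_xy p ux uy x y m -> 0 < M_x p ux uy x m.
Proof. move=> H /Mxy_pos Hm; have := PX_ge x y; have := PXM_ge x y m => *.
apply: Rdiv_lt_0_compat; lra. Qed.
Lemma supp_y x y m : 0 < PXY x y -> 0 < M_xy p ux uy x y m -> 0 < M_y p ux uy y m.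
Proof. move=> H /Mxy_pos Hm; have := PY_ge x y; have := PYM_ge x y m => *.
apply: Rdiv_lt_0_compat; lra. Qed.

Lemma Mxy_eq x y m : 0 < p x y -> 0 < alpha_xy ux uy x y ->
  M_xy p ux uy x y m = ux x m * uy y m / alpha_xy ux uy x y.
Proof. move=> Hp Ha. rewrite /M_xy PXY_eq /Defs.PXYM. field; repeat split; lra. Qed.

Lemma Mx_eq x m : 0 < pX x -> 0 < alpha_x p ux uy x ->
  M_x p ux uy x m = ux x m * v_x p uy x m / alpha_x p ux uy x.
Proof. move=> Hp Ha.
have E1 : PXM x m = ux x m * / q * rsum (fun y => p x y * uy y m).
  rewrite /Defs.PXM -rsum_scal; apply: rsum_ext => y; rewrite /Defs.PXYM; field; lra.
have E2 : v_x p uy x m = / pX x * rsum (fun y => p x y * uy y m).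
  rewrite /v_x -rsum_scal; apply: rsum_ext => y; rewrite /p_y_given_x; field; lra.
have E3 : PX x = pX x * alpha_x p ux uy x / q.
  have := alpha_x_eq Hp => E. have : PX x = alpha_x p ux uy x / q * pX x by rewrite E; field; lra.
  move=> ->; field; lra.
rewrite /M_x E1 E2 E3. field; repeat split; lra. Qed.

Lemma My_eq y m : 0 < pY y -> 0 < alpha_y p ux uy y ->
  M_y p ux uy y m = uy y m * v_y p ux y m / alpha_y p ux uy y.
Proof. move=> Hp Ha.
have E1 : PYM y m = uy y m * / q * rsum (fun x => p x y * ux x m).
  rewrite /Defs.PYM -rsum_scal; apply: rsum_ext => x; rewrite /Defs.PXYM; field; lra.
have E2 : v_y p ux y m = / pY y * rsum (fun x => p x y * ux x m).
  rewrite /v_y -rsum_scal; apply: rsum_ext => x; rewrite /p_x_given_y; field; lra.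
have E3 : PY y = pY y * alpha_y p ux uy y / q.
  have := alpha_y_eq Hp => E. have : PY y = alpha_y p ux uy y / q * pY y by rewrite E; field; lra.
  move=> ->; field; lra.
rewrite /M_y E1 E2 E3. field; repeat split; lra. Qed.

Lemma abs_bound r : Rabs (1 - r / q) <= 1/2 -> q / 2 <= r <= 3 * q / 2.
Proof. move=> H. have H1 := Rle_abs (1 - r / q). have H2 := Rle_abs (- (1 - r / q)).
rewrite Rabs_Ropp in H2. have E : r = r / q * q by field; lra.
rewrite E; split; nra. Qed.

Lemma part4 c eps x y : 1 <= c -> 0 < eps -> eps < 1/3 -> 0 < p x y ->
  inG1 p ux uy x y -> inG2 p ux uy c eps x y -> inG p ux uy c eps x y.
Proof. move=> Hc He He3 Hp /and3P [/Rleb_spec h1 /Rleb_spec h2 /Rleb_spec h3] /Rleb_spec hG2.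
move/abs_bound: h1 => h1. move/abs_bound: h2 => h2. move/abs_bound: h3 => h3.
have H0 : p x y <= pX x := rsum_ge_term y (fun y => hp0 x y).
have HpX : 0 < pX x by lra.
have H0' : p x y <= pY y := rsum_ge_term x (fun x => hp0 x y).
have HpY : 0 < pY y by lra.
have Haxy : 0 < alpha_xy ux uy x y by lra.
have HPXY : 0 < PXY x y by rewrite PXY_eq; apply: Rdiv_lt_0_compat => //; apply: Rmult_lt_0_compat.
have HPX : 0 < PX x by have := PX_ge x y; lra.
have HPY : 0 < PY y by have := PY_ge x y; lra.
have Rx := relent_ge0 (fun m => Mxy_ge0 m HPXY) (fun m => Mx_ge0 m HPX) (sum_Mxy HPXY) (Req_le _ _ (sum_Mx HPX)) (fun m => supp_x HPXY).
have Ry := relent_ge0 (fun m => Mxy_ge0 m HPXY) (fun m => My_ge0 m HPY) (sum_Mxy HPXY) (Req_le _ _ (sum_My HPY)) (fun m => supp_y HPXY).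
have Hc0 : 0 < c by lra.
have T1 := tail_eps (P := M_xy p ux uy x y) (Q := M_x p ux uy x) (a := ux x) (b := uy y) (v := v_x p uy x)
  (A := alpha_xy ux uy x y) (B := alpha_x p ux uy x) He He3 Hc0 (fun m => Mxy_ge0 m HPXY) (fun m => Mx_ge0 m HPX)
  (sum_Mxy HPXY) (Req_le _ _ (sum_Mx HPX)) (fun m => supp_x HPXY) ltac:(lra) Haxy ltac:(lra) ltac:(lra)
  (fun m => Mxy_eq m Hp Haxy) (fun m => Mx_eq m HpX ltac:(lra)) (fun m => proj1 (hux x m)).
have T2 := tail_eps (P := M_xy p ux uy x y) (Q := M_y p ux uy y) (a := uy y) (b := ux x) (v := v_y p ux y)
  (A := alpha_xy ux uy x y) (B := alpha_y p ux uy y) He He3 Hc0 (fun m => Mxy_ge0 m HPXY) (fun m => My_ge0 m HPY)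
  (sum_Mxy HPXY) (Req_le _ _ (sum_My HPY)) (fun m => supp_y HPXY) ltac:(lra) Haxy ltac:(lra) ltac:(lra)
  (fun m => ltac:(rewrite Mxy_eq // Rmult_comm //)) (fun m => My_eq m HpY ltac:(lra)) (fun m => proj1 (huy y m)).
have Vx : forall m, 0 <= v_x p uy x m.
  move=> m; apply: rsum_ge0 => y'; apply: Rmult_le_pos; last exact: proj1 (huy y' m).
  apply: Rle_mult_inv_pos => //.
have Vy : forall m, 0 <= v_y p ux y m.
  move=> m; apply: rsum_ge0 => x'; apply: Rmult_le_pos; last exact: proj1 (hux x' m).
  apply: Rle_mult_inv_pos => //.
have {}T1 := T1 Vx. have {}T2 := T2 Vy.
apply/Rleb_spec. rewrite prob_compl sum_Mxy //.
have := prob_union (fun m => Rleb (uy y m) (Rpower 2 (Defs.Delta c eps) * v_x p uy x m))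
   (fun m => Rleb (ux x m) (Rpower 2 (Defs.Delta c eps) * v_y p ux y m)) (fun m => Mxy_ge0 m HPXY).
lra.
Qed.

End Main.

Lemma prp_eq (X Y : finType) (p : X -> Y -> R) (E : X -> Y -> bool) :
  rsum (fun x => rsum (fun y => p x y)) = 1 ->
  prp p E = 1 - rsum (fun x => rsum (fun y => if ~~ E x y then p x y else 0)).
Proof. move=> H. rewrite /prp prob_compl /prob.
rewrite (rsum_pair (fun x y => if ~~ E x y then p x y else 0)).
by rewrite /ppair (rsum_pair (fun x y => p x y)) H. Qed.

Lemma rsum2_add (I J : finType) (f g : I -> J -> R) :
  rsum (fun x => rsum (fun y => f x y + g x y)) =
  rsum (fun x => rsum (fun y => f x y)) + rsum (fun x => rsum (fun y => g x y)).
Proof. rewrite -!rsum_add; apply: rsum_ext => x; by rewrite -!rsum_add. Qed.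

Theorem mainTheorem6 (X Y M : finType) (p : X -> Y -> R)
  (ux : X -> M -> R) (uy : Y -> M -> R) (c eps : R)
  (hc : 1 <= c) (heps0 : 0 < eps) (heps1 : eps < 1/3)
  (hp0 : forall x y, 0 <= p x y)
  (hp1 : rsum (fun x => rsum (fun y => p x y)) = 1)
  (hux : forall x m, 0 <= ux x m <= 1)
  (huy : forall y m, 0 <= uy y m <= 1)
  (hq : 0 < qc p ux uy)
  (h2 : relent (PXYpair p ux uy) (ppair p) <= eps ^ 2 / 4)
  (h3 : CMI_XM_Y p ux uy + CMI_YM_X p ux uy <= c) :
  prp p (inG1 p ux uy) > 1 - 6 * eps /\
  prp p (inG2 p ux uy c eps) >= 1 - 3 * eps / 2 /\
  prp p (fun x y => inG1 p ux uy x y && inG2 p ux uy c eps x y) >= 1 - 15 * eps / 2 /\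
  (forall x y, 0 < p x y -> inG1 p ux uy x y -> inG2 p ux uy c eps x y ->
     inG p ux uy c eps x y).
Proof.
have HL : L1 p ux uy < eps by apply: L1_lt.
have HL0 : 0 <= L1 p ux uy.
  apply: rsum_ge0 => x; apply: rsum_ge0 => y; exact: Rabs_pos.
have N1 : rsum (fun x => rsum (fun y => if ~~ inG1 p ux uy x y then p x y else 0)) <= 6 * L1 p ux uy by apply: N1_bound.
have N2 : rsum (fun x => rsum (fun y => if ~~ inG2 p ux uy c eps x y then p x y else 0)) <= eps + L1 p ux uy / 2 by apply: N2_bound => //; lra.
rewrite !prp_eq //.
split; first lra. split; first lra. split.
  have Hpt : forall x y, (if ~~ (inG1 p ux uy x y && inG2 p ux uy c eps x y) then p x y else 0) <=
      (if ~~ inG1 p ux uy x y then p x y else 0) + (if ~~ inG2 p ux uy c eps x y then p x y else 0).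
    move=> x y; have := hp0 x y; case: (inG1 _ _ _ _ _); case: (inG2 _ _ _ _ _ _ _) => /=; lra.
  have := rsum_le (fun x => rsum_le (fun y => Hpt x y)).
  rewrite rsum2_add. lra.
move=> x y; exact: part4.
Qed.
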